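(* Let $p$ be a prime, $m$ a positive integer, $q=p^m$ and $n=q-1$. For any integer $e$ with $1 \le e \le n-1$ and $\gcd(e, q-1)=2$, the size $\ell_e$ of the $p$-cyclotomic coset $C_e$ modulo $n$ is equal to $m$.
   Context: For $j\in\mathbb{Z}_n=\{0,1,\dots,n-1\}$, the $p$-cyclotomic coset modulo $n$ containing $j$ is $C_j=\{j, pj, p^2j,\dots,p^{\ell_j-1}j\}$ (computed modulo $n$), where $\ell_j$ is the smallest positive integer with $p^{\ell_j}j\equiv j \pmod n$; $\ell_j=|C_j|$ is called the size of $C_j$. *)

(* Defs.v *)
From mathcomp Require Import all_boot.

Definition is_cyclotomic_coset_size (p n j l : nat) : Prop :=
  [/\ 0 < l, p ^ l * j = j %[mod n]
    & forall k, 0 < k -> p ^ k * j = j %[mod n] -> l <= k].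

(* Main.v *)
Require Import Defs.
From mathcomp Require Import all_boot.
From mathcomp Require Import zify.

Theorem lemma1 (p m e : nat) :
  prime p -> 0 < m ->
  let q := p ^ m in let n := q - 1 in
  1 <= e <= n - 1 -> gcdn e (q - 1) = 2 ->
  is_cyclotomic_coset_size p n e m.
Proof.
move=> pp m0 q n /andP[e1 en] g.
have p2 : 2 <= p by apply: prime_gt1.
have qpos : 0 < q by rewrite /q expn_gt0 (leq_trans _ p2).
have qn : q = n.+1 by rewrite /n; lia.
split => //.
  by rewrite -/q qn mulSn addnC mulnC modnMDl.
move=> k k0 hk; rewrite leqNgt; apply/negP => km.
have d2e : 2 %| e by rewrite -g dvdn_gcdl.
have d2n : 2 %| n by rewrite -g /n dvdn_gcdr.
move: d2e d2n => /dvdnP[e' De] /dvdnP[n' Dn].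
have pk1 : 1 <= p ^ k by rewrite expn_gt0 (leq_trans _ p2).
have hk' : n %| (p ^ k - 1) * e.
  rewrite mulnBl mul1n -eqn_mod_dvd; first by apply/eqP.
  by rewrite leq_pmull.
have cop : coprime n' e'.
  rewrite /coprime gcdnC; apply/eqP.
  have : gcdn (e' * 2) (n' * 2) = 2 by rewrite -De -Dn.
  rewrite -muln_gcdl; lia.
have hd : n' %| (p ^ k - 1).
  rewrite -(Gauss_dvdl _ cop).
  rewrite -(@dvdn_pmul2r 2) //.
  by rewrite -mulnA -De -Dn.
have le := dvdn_leq _ hd.
have pkgt : 1 < p ^ k by rewrite -(expn0 p) ltn_exp2l.
have : n' <= p ^ k - 1 by apply: le; lia.
have pk : p ^ k <= p ^ m.-1 by rewrite leq_exp2l //; lia.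
have pm : p ^ m = p * p ^ m.-1 by rewrite -expnS prednK.
have h2 : 2 * p ^ m.-1 <= p * p ^ m.-1 by rewrite leq_mul2r p2 orbT.
have qn' : p * p ^ m.-1 = n.+1 by rewrite -pm -qn.
move: qn' Dn h2 pk pkgt.
move: (p ^ m.-1) (p ^ k) => a b; clearbody n.
clear -p2.
lia.
Qed.
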